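(* Let $G$ be a topological group which is a Baire space. Then the following are equivalent: (i) $G$ is metrizable; (ii) $G$ has the strong Pytkeev property; (iii) $G$ has countable $ck$-character; (iv) $G$ has countable $cn$-character; (v) $G$ has a $\mathfrak{G}$-base satisfying the condition $(\mathbf{D})$.
   Context: A space $X$ has the strong Pytkeev property if for each $x\in X$ there is a countable family $\mathcal{D}$ of subsets of $X$ such that for each neighborhood $U$ of $x$ and each $A\subseteq X$ with $x\in\overline{A}\setminus A$ there is $D\in\mathcal{D}$ with $D\subseteq U$ and $D\cap A$ infinite. For $x\in X$, a family $\mathcal{N}$ of subsets of $X$ is a $cn$-network at $x$ if for each neighborhood $O_x$ of $x$ the set $\bigcup\{N\in\mathcal{N}:x\in N\subseteq O_x\}$ is a neighborhood of $x$; it is a $ck$-network at $x$ if for every neighborhood $O_x$ there is a neighborhood $U_x$ of $x$ such that for each compact $K\subseteq U_x$ there is a finite $\mathcal{F}\subseteq\mathcal{N}$ with $x\in\bigcap\mathcal{F}$ and $K\subseteq\bigcup\mathcal{F}\subseteq O_x$. The $cn$-character (resp. $ck$-character) of $X$ is the supremum over $x\in X$ of the least cardinality of a $cn$-network (resp. $ck$-network) at $x$. $\mathbb{N}^\mathbb{N}$ is ordered coordinatewise. A $\mathfrak{G}$-base of a topological group $G$ is a base $\{U_\alpha:\alpha\in\mathbb{N}^\mathbb{N}\}$ of neighborhoods of the unit $e$ with $U_\beta\subseteq U_\alpha$ whenever $\alpha\le\beta$. For $\alpha\in\mathbb{N}^\mathbb{N}$, $k\in\mathbb{N}$, let $I_k(\alpha)=\{\beta:\beta_i=\alpha_i,\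 i=1,\dots,k\}$ and $D_k(\alpha)=\bigcap_{\beta\in I_k(\alpha)}U_\beta$; the base satisfies condition $(\mathbf{D})$ if $U_\alpha=\bigcup_k D_k(\alpha)$ for every $\alpha$. *)

(* Defs.v *)
From Stdlib Require Import Reals List Classical.
Open Scope R_scope.
Set Implicit Arguments.

Section Topology.
Variable X : Type.
Variable opn : (X -> Prop) -> Prop.

Definition subset (A B : X -> Prop) : Prop := forall x, A x -> B x.

Definition is_topology : Prop :=
  opn (fun _ => True) /\
  (forall U V, opn U -> opn V -> opn (fun x => U x /\ V x)) /\
  (forall F : (X -> Prop) -> Prop, (forall U, F U -> opn U) ->
      opn (fun x => exists U, F U /\ U x)).

Definition hausdorff : Prop :=
  forall x y, x <> y -> exists U V, opn U /\ opn V /\ U x /\ V y /\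
     (forall z, U z -> V z -> False).

Definition nbhd (x : X) (N : X -> Prop) : Prop :=
  exists U, opn U /\ U x /\ subset U N.

Definition closure (A : X -> Prop) (x : X) : Prop :=
  forall U, opn U -> U x -> exists y, U y /\ A y.

Definition dense (A : X -> Prop) : Prop := forall x, closure A x.

Definition baire_space : Prop :=
  forall U : nat -> (X -> Prop), (forall n, opn (U n)) -> (forall n, dense (U n)) ->
    dense (fun x => forall n, U n x).

Definition infinite_set (A : X -> Prop) : Prop :=
  ~ exists l : list X, forall x, A x -> In x l.

Definition compact (K : X -> Prop) : Prop :=
  forall F : (X -> Prop) -> Prop, (forall U, F U -> opn U) ->
    subset K (fun x => exists U, F U /\ U x) ->
    exists l : list (X -> Prop), (forall U, In U l -> F U) /\
      subset K (fun x => exists U, In U l /\ U x).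

Definition countable_family (F : (X -> Prop) -> Prop) : Prop :=
  exists f : nat -> (X -> Prop), forall S, F S -> exists n, f n = S.

Definition metrizable : Prop :=
  exists d : X -> X -> R,
    (forall x y, 0 <= d x y) /\
    (forall x y, d x y = 0 <-> x = y) /\
    (forall x y, d x y = d y x) /\
    (forall x y z, d x z <= d x y + d y z) /\
    (forall U, opn U <-> (forall x, U x -> exists eps, eps > 0 /\
                               forall y, d x y < eps -> U y)).

Definition strong_pytkeev : Prop :=
  forall x, exists D : (X -> Prop) -> Prop, countable_family D /\
    forall U A, nbhd x U -> closure A x -> ~ A x ->
      exists S, D S /\ subset S U /\ infinite_set (fun y => S y /\ A y).

Definition cn_network_at (x : X) (N : (X -> Prop) -> Prop) : Prop :=
  forall O, nbhd x O ->
    nbhd x (fun y => exists S, N S /\ S x /\ subset S O /\ S y).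

Definition ck_network_at (x : X) (N : (X -> Prop) -> Prop) : Prop :=
  forall O, nbhd x O -> exists U, nbhd x U /\
    forall K, compact K -> subset K U ->
      exists Fl : list (X -> Prop), (forall S, In S Fl -> N S) /\
        (forall S, In S Fl -> S x) /\
        subset K (fun y => exists S, In S Fl /\ S y) /\
        subset (fun y => exists S, In S Fl /\ S y) O.

Definition countable_cn_character : Prop :=
  forall x, exists N, countable_family N /\ cn_network_at x N.

Definition countable_ck_character : Prop :=
  forall x, exists N, countable_family N /\ ck_network_at x N.

End Topology.

Section Groups.
Variable G : Type.
Variable opn : (G -> Prop) -> Prop.
Variable mul : G -> G -> G.
Variable inv : G -> G.
Variable e : G.

Definition is_group : Prop :=
  (forall x y z, mul x (mul y z) = mul (mul x y) z) /\
  (forall x, mul e x = x /\ mul x e = x) /\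
  (forall x, mul x (inv x) = e /\ mul (inv x) x = e).

Definition is_topological_group : Prop :=
  @is_topology G opn /\ is_group /\
  (forall x y W, opn W -> W (mul x y) ->
     exists U V, opn U /\ opn V /\ U x /\ V y /\
       forall a b, U a -> V b -> W (mul a b)) /\
  (forall x W, opn W -> W (inv x) ->
     exists U, opn U /\ U x /\ forall a, U a -> W (inv a)).

(* N^N ordered coordinatewise; indices are shifted to start at 0 *)
Definition le_seq (a b : nat -> nat) : Prop := forall i, (a i <= b i)%nat.

Definition is_G_base (U : (nat -> nat) -> (G -> Prop)) : Prop :=
  (forall a, @nbhd G opn e (U a)) /\
  (forall O, @nbhd G opn e O -> exists a, @subset G (U a) O) /\
  (forall a b, le_seq a b -> @subset G (U b) (U a)).

Definition D_set (U : (nat -> nat) -> (G -> Prop)) (k : nat) (a : nat -> nat) : G -> Prop :=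
  fun g => forall b, (forall i, (i < k)%nat -> b i = a i) -> U b g.

Definition condition_D (U : (nat -> nat) -> (G -> Prop)) : Prop :=
  forall a g, U a g <-> exists k, (1 <= k)%nat /\ D_set U k a g.

Definition has_G_base_D : Prop :=
  exists U, is_G_base U /\ condition_D U.

End Groups.

(* Main.v *)
Require Import Defs.
From Stdlib Require Import Reals List Classical Lra Lia Cantor.
From Stdlib Require Import FunctionalExtensionality PropExtensionality ClassicalEpsilon.
Open Scope R_scope.

Section GT.
Variable G : Type.
Variable opn : (G -> Prop) -> Prop.
Variable mul : G -> G -> G.
Variable inv : G -> G.
Variable e : G.
Hypothesis HT : is_topological_group opn mul inv e.

Lemma Htop : is_topology opn. Proof. apply HT. Qed.
Lemma mulA x y z : mul x (mul y z) = mul (mul x y) z. Proof. apply HT. Qed.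
Lemma mul_e_l x : mul e x = x. Proof. apply HT. Qed.
Lemma mul_e_r x : mul x e = x. Proof. apply HT. Qed.
Lemma mul_inv_r x : mul x (inv x) = e. Proof. apply HT. Qed.
Lemma mul_inv_l x : mul (inv x) x = e. Proof. apply HT. Qed.

Lemma mul_cancel a b c : mul a b = mul a c -> b = c.
Proof. intro H. rewrite <- (mul_e_l b), <- (mul_e_l c), <- (mul_inv_l a), <- !mulA, H. reflexivity. Qed.

Lemma inv_e : inv e = e.
Proof. apply (mul_cancel e). rewrite mul_inv_r, mul_e_l. reflexivity. Qed.

Lemma inv_mul a b : inv (mul a b) = mul (inv b) (inv a).
Proof. apply (mul_cancel (mul a b)). rewrite mul_inv_r.
 rewrite <- mulA, (mulA b), mul_inv_r, mul_e_l, mul_inv_r. reflexivity. Qed.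

Lemma inv_inv a : inv (inv a) = a.
Proof. apply (mul_cancel (inv a)). rewrite mul_inv_r, mul_inv_l. reflexivity. Qed.

Lemma mul_inv_cancel_l a b : mul (inv a) (mul a b) = b.
Proof. rewrite mulA, mul_inv_l, mul_e_l. reflexivity. Qed.
Lemma mul_cancel_inv_l a b : mul a (mul (inv a) b) = b.
Proof. rewrite mulA, mul_inv_r, mul_e_l. reflexivity. Qed.

Lemma open_local (S : G -> Prop) :
  (forall x, S x -> exists V, opn V /\ V x /\ subset V S) -> opn S.
Proof.
  intro H. destruct Htop as [_ [_ Hu]].
  assert (E : S = (fun x => exists U, (opn U /\ subset U S) /\ U x)).
  { apply functional_extensionality; intro x; apply propositional_extensionality; split.
    - intro Sx. destruct (H x Sx) as [V [? [? ?]]]. exists V. tauto.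
    - intros [U [[_ HU] Ux]]. apply HU, Ux. }
  rewrite E. apply Hu. intros U [? _]; assumption.
Qed.

Lemma open_all : opn (fun _ => True). Proof. apply Htop. Qed.
Lemma open_inter U V : opn U -> opn V -> opn (fun x => U x /\ V x). Proof. apply Htop. Qed.

Lemma open_translate c W : opn W -> opn (fun y => W (mul c y)).
Proof.
  intro HW. apply open_local. intros y Hy.
  destruct HT as [_ [_ [Hm _]]].
  destruct (Hm c y W HW Hy) as [U [V [_ [oV [Uc [Vy H]]]]]].
  exists V. split; [assumption|split; [assumption|]]. intros z Vz. apply H; assumption.
Qed.

Lemma open_inv W : opn W -> opn (fun y => W (inv y)).
Proof.
  intro HW. apply open_local. intros y Hy.
  destruct HT as [_ [_ [_ Hi]]].
  destruct (Hi y W HW Hy) as [U [oU [Uy H]]].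
  exists U. split; [assumption|split; [assumption|]]. intros z Uz. apply H; assumption.
Qed.

Lemma nbhd_e_open O : nbhd opn e O -> exists P, opn P /\ P e /\ subset P O.
Proof. intro H; exact H. Qed.

Lemma pair_lem O : opn O -> O e -> exists W, opn W /\ W e /\ subset W O /\
   forall a b, W a -> W b -> O (mul a b).
Proof.
  intros oO Oe. destruct HT as [_ [_ [Hm _]]].
  assert (Oee : O (mul e e)) by (rewrite mul_e_l; assumption).
  destruct (Hm e e O oO Oee) as [U [V [oU [oV [Ue [Ve H]]]]]].
  exists (fun x => (U x /\ V x) /\ O x). split.
  - apply open_inter; [apply open_inter|]; assumption.
  - split; [tauto|split].
    + intros x Hx; tauto.
    + intros a b Ha Hb. apply H; tauto.
Qed.

Definition symm (W : G -> Prop) := forall a, W a -> W (inv a).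

Lemma sym_lem W : opn W -> W e -> exists S, opn S /\ S e /\ subset S W /\ symm S.
Proof.
  intros oW We. exists (fun g => W g /\ W (inv g)). split.
  - apply open_inter; [|apply open_inv]; assumption.
  - split; [rewrite inv_e; tauto|split].
    + intros x Hx; tauto.
    + intros a [H1 H2]. rewrite inv_inv. tauto.
Qed.

Lemma triple_lem O : nbhd opn e O -> exists W, opn W /\ W e /\ symm W /\
  forall a b c, W a -> W b -> W c -> O (mul a (mul b c)).
Proof.
  intros [P [oP [Pe PO]]].
  destruct (pair_lem P oP Pe) as [W1 [o1 [e1 [s1 h1]]]].
  destruct (pair_lem W1 o1 e1) as [W2 [o2 [e2 [s2 h2]]]].
  destruct (sym_lem W2 o2 e2) as [S [oS [eS [sS yS]]]].
  exists S. split; [assumption|split;[assumption|split;[assumption|]]].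
  intros a b c Ha Hb Hc. apply PO, h1; auto.
Qed.

Lemma quad_lem O : nbhd opn e O -> exists W, opn W /\ W e /\ symm W /\
  forall a b c d, W a -> W b -> W c -> W d -> O (mul a (mul b (mul c d))).
Proof.
  intros [P [oP [Pe PO]]].
  destruct (pair_lem P oP Pe) as [W1 [o1 [e1 [s1 h1]]]].
  destruct (pair_lem W1 o1 e1) as [W2 [o2 [e2 [s2 h2]]]].
  destruct (pair_lem W2 o2 e2) as [W3 [o3 [e3 [s3 h3]]]].
  destruct (sym_lem W3 o3 e3) as [S [oS [eS [sS yS]]]].
  exists S. split; [assumption|split;[assumption|split;[assumption|]]].
  intros a b c d Ha Hb Hc Hd. apply PO, h1; auto.
Qed.

End GT.

Section BK.
Variable G : Type.
Variable opn : (G -> Prop) -> Prop.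
Variable mul : G -> G -> G.
Variable inv : G -> G.
Variable e : G.
Hypothesis HT : is_topological_group opn mul inv e.
Hypothesis HH : hausdorff opn.
Variable B : nat -> (G -> Prop).
Hypothesis HB : forall O, nbhd opn e O -> exists n, nbhd opn e (B n) /\ subset (B n) O.
Let mulA' := mulA G opn mul inv e HT.
Let mul_e_l' := mul_e_l G opn mul inv e HT.
Let mul_e_r' := mul_e_r G opn mul inv e HT.

Definition stepP (V : G -> Prop) (n : nat) (W : G -> Prop) :=
  opn W /\ W e /\ symm G inv W /\
  (forall a b c, W a -> W b -> W c -> V (mul a (mul b c))) /\
  (nbhd opn e (B n) -> subset W (B n)).

Lemma step_ex V n : exists W, nbhd opn e V -> stepP V n W.
Proof.
  destruct (classic (nbhd opn e V)) as [HV|HV]; [|exists V; tauto].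
  destruct (classic (nbhd opn e (B n))) as [HBn|HBn].
  - assert (Hn : nbhd opn e (fun g => V g /\ B n g)).
    { destruct HV as [P1 [o1 [e1 s1]]]. destruct HBn as [P2 [o2 [e2 s2]]].
      exists (fun g => P1 g /\ P2 g). split; [apply (open_inter G opn mul inv e HT); auto|].
      split; [tauto|]. intros x [? ?]; split; auto. }
    destruct (triple_lem G opn mul inv e HT _ Hn) as [W [oW [We [sW hW]]]].
    exists W. intros _. split; [auto|split;[auto|split;[auto|split]]].
    + intros a b c Ha Hb Hc. apply (proj1 (hW a b c Ha Hb Hc)).
    + intros _ x Wx. assert (H := hW e x e We Wx We). rewrite mul_e_l', mul_e_r' in H; apply H.
  - destruct (triple_lem G opn mul inv e HT _ HV) as [W [oW [We [sW hW]]]].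
    exists W. intros _. split; [auto|split;[auto|split;[auto|split]]]; auto.
    intro; contradiction.
Qed.

Definition nextV V n := proj1_sig (constructive_indefinite_description _ (step_ex V n)).

Fixpoint Vs (n : nat) : G -> Prop :=
  match n with 0 => fun _ => True | S m => nextV (Vs m) m end.

Lemma Vs_prop n : nbhd opn e (Vs n) /\ symm G inv (Vs n).
Proof.
  induction n as [|n IH].
  - split; [exists (fun _ => True); split; [apply (open_all G opn mul inv e HT)|split; [auto| intros ? ?; auto]]|intros ? ?; auto].
  - simpl. unfold nextV. destruct (constructive_indefinite_description _ (step_ex (Vs n) n)) as [W HW].
    simpl. destruct (HW (proj1 IH)) as [oW [We [sW _]]]. split; auto.
    exists W. split; auto. split; auto. intros ? ?; auto.
Qed.

Lemma Vs_step n : stepP (Vs n) n (Vs (S n)).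
Proof.
  simpl. unfold nextV. destruct (constructive_indefinite_description _ (step_ex (Vs n) n)) as [W HW].
  simpl. apply HW, (proj1 (Vs_prop n)).
Qed.

Lemma Vs_e n : Vs n e.
Proof. destruct (Vs_prop n) as [[P [_ [Pe PV]]] _]. auto. Qed.

Lemma Vs_sym n a : Vs n a -> Vs n (inv a).
Proof. apply (Vs_prop n). Qed.

Lemma Vs_triple n a b c : Vs (S n) a -> Vs (S n) b -> Vs (S n) c -> Vs n (mul a (mul b c)).
Proof. apply (Vs_step n). Qed.

Lemma Vs_mono1 n a : Vs (S n) a -> Vs n a.
Proof. intro H. assert (H' := Vs_triple n e a e (Vs_e _) H (Vs_e _)).
  rewrite mul_e_r', mul_e_l' in H'. auto. Qed.

Lemma Vs_mono n k a : (n <= k)%nat -> Vs k a -> Vs n a.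
Proof. intros Hk. induction Hk; auto. intro. apply IHHk, Vs_mono1; auto. Qed.

Lemma Vs_base O : nbhd opn e O -> exists n, subset (Vs n) O.
Proof.
  intro HO. destruct (HB O HO) as [n [Hn Hs]]. exists (S n).
  intros x Hx. apply Hs. apply (Vs_step n); auto.
Qed.

Fixpoint wt (l : list (nat * G)) : R :=
  match l with nil => 0 | (k, _) :: t => (/2)^k + wt t end.
Fixpoint pr (l : list (nat * G)) : G :=
  match l with nil => e | (_, g) :: t => mul g (pr t) end.
Fixpoint valid (l : list (nat * G)) : Prop :=
  match l with nil => True | (k, g) :: t => Vs k g /\ valid t end.

Lemma pow2_pos k : 0 < (/2)^k.
Proof. apply pow_lt. lra. Qed.

Lemma wt_ge0 l : 0 <= wt l.
Proof. induction l as [|[k g] t IH]; simpl; [lra|]. pose proof (pow2_pos k). lra. Qed.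

Lemma wt_app l1 l2 : wt (l1 ++ l2) = wt l1 + wt l2.
Proof. induction l1 as [|[k g] t IH]; simpl; [lra|]. rewrite IH. lra. Qed.

Lemma pr_app l1 l2 : pr (l1 ++ l2) = mul (pr l1) (pr l2).
Proof. induction l1 as [|[k g] t IH]; simpl.
  - rewrite mul_e_l'. auto.
  - rewrite IH, mulA'. auto. Qed.

Lemma valid_app l1 l2 : valid (l1 ++ l2) <-> valid l1 /\ valid l2.
Proof. induction l1 as [|[k g] t IH]; simpl; tauto. Qed.

Lemma wt_zero l : wt l <= 0 -> l = nil.
Proof. destruct l as [|[k g] t]; auto. simpl. intro. pose proof (pow2_pos k). pose proof (wt_ge0 t). lra. Qed.

Fixpoint rinv (l : list (nat * G)) : list (nat * G) :=
  match l with nil => nil | (k, g) :: t => rinv t ++ ((k, inv g) :: nil) end.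

Lemma rinv_prop l : wt (rinv l) = wt l /\ pr (rinv l) = inv (pr l) /\ (valid l -> valid (rinv l)).
Proof.
  induction l as [|[k g] t [IH1 [IH2 IH3]]]; simpl.
  - rewrite (inv_e G opn mul inv e HT). tauto.
  - rewrite wt_app, pr_app, valid_app, IH1, IH2. simpl. split; [lra|split].
    + rewrite mul_e_r', (inv_mul G opn mul inv e HT). auto.
    + intros [H1 H2]. split; auto. split; auto. apply Vs_sym; auto.
Qed.

Lemma split_ex l : forall t, 0 <= t -> t < wt l -> exists A k g Bl,
  l = A ++ (k, g) :: Bl /\ wt A <= t /\ t < wt A + (/2)^k.
Proof.
  induction l as [|[k g] l IH]; intros t Ht Hl; simpl in Hl; [lra|].
  destruct (Rlt_le_dec t ((/2)^k)) as [Hk|Hk].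
  - exists nil, k, g, l. simpl. split; auto. lra.
  - destruct (IH (t - (/2)^k)) as [A [k' [g' [Bl [E [Q1 Q2]]]]]]; try lra.
    exists ((k, g) :: A), k', g', Bl. rewrite E. simpl. split; auto. lra.
Qed.

Lemma pow_le_inv k n : (/2)^k <= (/2)^n -> (n <= k)%nat.
Proof.
  intro H. destruct (Compare_dec.le_lt_dec n k) as [h|h]; auto. exfalso.
  assert (E : (/2)^n = (/2)^k * (/2)^(n-k)) by (rewrite <- pow_add; f_equal; lia).
  assert ((/2)^(n-k) < 1) by (apply pow_lt_1_compat; [lra|lia]).
  pose proof (pow2_pos k). rewrite E in H. nra.
Qed.

Lemma pow_S n : (/2)^(S n) + (/2)^(S n) = (/2)^n.
Proof. simpl. lra. Qed.

Lemma key m : forall l n, (length l <= m)%nat -> valid l -> wt l <= (/2)^n -> Vs n (pr l).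
Proof.
  induction m as [|m IH]; intros l n Hlen Hv Hw.
  - destruct l; simpl in Hlen; [|lia]. simpl. apply Vs_e.
  - destruct l as [|[k g] t]; [apply Vs_e|].
    pose proof (pow_S n) as Hp. pose proof (pow2_pos (S n)).
    destruct (Rle_lt_dec (wt ((k,g)::t)) ((/2)^(S n))) as [Hle|Hlt].
    + change ((/2)^k + wt t <= (/2)^(S n)) in Hle. simpl in Hv, Hlen |- *. destruct Hv as [Hg Ht].
      pose proof (wt_ge0 t). pose proof (pow2_pos k).
      assert (Hk : (S n <= k)%nat) by (apply pow_le_inv; lra).
      assert (HH1 := IH t (S n) ltac:(lia) Ht ltac:(lra)).
      assert (H2 := Vs_triple n e g (pr t) (Vs_e _) (Vs_mono _ _ _ Hk Hg) HH1).
      rewrite mul_e_l' in H2. auto.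
    + destruct (split_ex ((k,g)::t) ((/2)^(S n)) ltac:(lra) Hlt) as [A [k' [g' [Bl [E [Q1 Q2]]]]]].
      rewrite E in Hv, Hw, Hlen |- *. rewrite length_app in Hlen. simpl in Hlen.
      rewrite wt_app in Hw. simpl in Hw. rewrite pr_app. simpl.
      apply valid_app in Hv. destruct Hv as [HA [Hg HBl]].
      pose proof (wt_ge0 A). pose proof (wt_ge0 Bl).
      assert (Hk : (n <= k')%nat) by (apply pow_le_inv; lra).
      assert (HPA := IH A (S n) ltac:(lia) HA ltac:(lra)).
      assert (HPB := IH Bl (S n) ltac:(lia) HBl ltac:(lra)).
      destruct (Nat.eq_dec k' n) as [Ek|Ek].
      * subst k'. assert (A = nil) by (apply wt_zero; lra).
        assert (Bl = nil) by (apply wt_zero; lra). subst. simpl.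
        rewrite mul_e_l', mul_e_r'. auto.
      * apply Vs_triple; auto. apply (Vs_mono _ k'); auto. lia.
Qed.

Lemma key' l n : valid l -> wt l <= (/2)^n -> Vs n (pr l).
Proof. apply (key (length l)). lia. Qed.


Definition Ech x y (r : R) := exists l, valid l /\ pr l = mul (inv x) y /\ r = - wt l.

Lemma Ech_bound x y : bound (Ech x y).
Proof. exists 0. intros r [l [_ [_ ->]]]. pose proof (wt_ge0 l). lra. Qed.

Lemma Ech_ne x y : exists r, Ech x y r.
Proof. exists (- wt ((0%nat, mul (inv x) y) :: nil)). exists ((0%nat, mul (inv x) y) :: nil).
  simpl. split; [split; auto|split; [apply mul_e_r'|auto]]. Qed.

Definition dist x y := - proj1_sig (completeness (Ech x y) (Ech_bound x y) (Ech_ne x y)).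

Lemma dist_spec x y : is_lub (Ech x y) (- dist x y).
Proof. unfold dist. destruct (completeness _ _ _) as [m Hm]. simpl. rewrite Ropp_involutive. auto. Qed.

Lemma dist_le x y l : valid l -> pr l = mul (inv x) y -> dist x y <= wt l.
Proof. intros Hv Hp. destruct (dist_spec x y) as [H1 _].
  assert (- wt l <= - dist x y) by (apply H1; exists l; auto). lra. Qed.

Lemma dist_ge0 x y : 0 <= dist x y.
Proof. destruct (dist_spec x y) as [_ H2].
  assert (- dist x y <= 0). { apply H2. intros r [l [_ [_ ->]]]. pose proof (wt_ge0 l). lra. } lra. Qed.

Lemma dist_lt x y eps : dist x y < eps -> exists l, valid l /\ pr l = mul (inv x) y /\ wt l < eps.
Proof.
  intro H. apply NNPP. intro Hn. destruct (dist_spec x y) as [_ H2].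
  assert (- dist x y <= - eps). { apply H2. intros r [l [Hv [Hp ->]]].
    destruct (Rle_lt_dec eps (wt l)) as [h|h]; [lra|]. exfalso. apply Hn. exists l. auto. }
  lra.
Qed.

Lemma dist_refl x : dist x x = 0.
Proof. apply Rle_antisym; [|apply dist_ge0].
  apply (dist_le x x nil); simpl; auto. rewrite (mul_inv_l G opn mul inv e HT). auto. Qed.

Lemma dist_sym_le x y : dist x y <= dist y x.
Proof.
  destruct (Rle_lt_dec (dist x y) (dist y x)) as [h|h]; auto. exfalso.
  destruct (dist_lt y x (dist x y) h) as [l [Hv [Hp Hw]]].
  destruct (rinv_prop l) as [E1 [E2 E3]].
  assert (dist x y <= wt (rinv l)). { apply dist_le; auto. rewrite E2, Hp.
    rewrite (inv_mul G opn mul inv e HT), (inv_inv G opn mul inv e HT). auto. }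
  lra.
Qed.

Lemma dist_tri x y z : dist x z <= dist x y + dist y z.
Proof.
  destruct (Rle_lt_dec (dist x z) (dist x y + dist y z)) as [h|h]; auto. exfalso.
  set (d := dist x z - dist x y - dist y z).
  destruct (dist_lt x y (dist x y + d/2) ltac:(unfold d; lra)) as [l1 [v1 [p1 w1]]].
  destruct (dist_lt y z (dist y z + d/2) ltac:(unfold d; lra)) as [l2 [v2 [p2 w2]]].
  assert (dist x z <= wt (l1 ++ l2)). { apply dist_le. apply valid_app; auto.
    rewrite pr_app, p1, p2, <- mulA'. rewrite (mul_cancel_inv_l G opn mul inv e HT). auto. }
  rewrite wt_app in H. unfold d in *. lra.
Qed.

Lemma dist_zero x y : dist x y = 0 -> x = y.
Proof.
  intro H0.
  assert (Hall : forall n, Vs n (mul (inv x) y)).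
  { intro n. assert (Hd : dist x y < (/2)^n) by (rewrite H0; apply pow2_pos).
    destruct (dist_lt x y ((/2)^n) Hd) as [l [Hv [Hp Hw]]].
    rewrite <- Hp. apply key'; auto. lra. }
  assert (Ee : mul (inv x) y = e).
  { apply NNPP. intro Hne. destruct (HH _ _ Hne) as [U [V [oU [oV [Ug [Ve Hd]]]]]].
    assert (HV : nbhd opn e V) by (exists V; split; auto; split; auto; intros ? ?; auto).
    destruct (Vs_base V HV) as [n Hn].
    apply (Hd (mul (inv x) y)); auto. }
  rewrite <- (mul_cancel_inv_l G opn mul inv e HT x y), Ee, mul_e_r'. auto.
Qed.

Lemma dist_open U : opn U <-> (forall x, U x -> exists eps, eps > 0 /\ forall y, dist x y < eps -> U y).
Proof.
  split.
  - intros oU x Ux.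
    destruct (Vs_base (fun g => U (mul x g))) as [n Hn].
    { exists (fun g => U (mul x g)). split; [apply (open_translate G opn mul inv e HT); auto|].
      split; [rewrite mul_e_r'; auto|intros ? ?; auto]. }
    exists ((/2)^n). split; [apply pow2_pos|]. intros y Hy.
    destruct (dist_lt x y _ Hy) as [l [Hv [Hp Hw]]].
    assert (Vs n (mul (inv x) y)) by (rewrite <- Hp; apply key'; auto; lra).
    apply Hn in H. rewrite (mul_cancel_inv_l G opn mul inv e HT) in H. auto.
  - intro H. apply (open_local G opn mul inv e HT). intros x Ux.
    destruct (H x Ux) as [eps [Heps Hb]].
    destruct (pow_lt_1_zero (/2) ltac:(rewrite Rabs_pos_eq; lra) eps Heps) as [n Hn].
    specialize (Hn n (le_n n)). rewrite Rabs_pos_eq in Hn by (apply Rlt_le, pow2_pos).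
    destruct (proj1 (Vs_prop n)) as [P [oP [Pe PV]]].
    exists (fun y => P (mul (inv x) y)). split; [apply (open_translate G opn mul inv e HT); auto|].
    split; [rewrite (mul_inv_l G opn mul inv e HT); auto|].
    intros y Py. apply Hb.
    assert (dist x y <= wt ((n, mul (inv x) y) :: nil)).
    { apply dist_le; simpl; [split; auto|apply mul_e_r']. }
    simpl in H0. lra.
Qed.

Lemma BK_metrizable : metrizable opn.
Proof.
  exists dist. split; [apply dist_ge0|split; [|split; [|split; [apply dist_tri|apply dist_open]]]].
  - intros x y; split; [apply dist_zero|intros ->; apply dist_refl].
  - intros x y; apply Rle_antisym; apply dist_sym_le.
Qed.

End BK.

Section Metric.
Variable X : Type.
Variable opn : (X -> Prop) -> Prop.
Variable d : X -> X -> R.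
Hypothesis d0 : forall x y, 0 <= d x y.
Hypothesis dz : forall x y, d x y = 0 <-> x = y.
Hypothesis ds : forall x y, d x y = d y x.
Hypothesis dt : forall x y z, d x z <= d x y + d y z.
Hypothesis dopn : forall U, opn U <-> (forall x, U x -> exists eps, eps > 0 /\
                               forall y, d x y < eps -> U y).

Definition ball x r := fun y => d x y < r.

Lemma ball_open x r : opn (ball x r).
Proof. apply dopn. intros y Hy. exists (r - d x y). split; [unfold ball in Hy; lra|].
  intros z Hz. unfold ball. pose proof (dt x y z). lra. Qed.

Lemma ball_center x r : 0 < r -> ball x r x.
Proof. intro. unfold ball. rewrite (proj2 (dz x x) eq_refl). auto. Qed.

Lemma ball_nbhd x r : 0 < r -> nbhd opn x (ball x r).
Proof. intro. exists (ball x r). split; [apply ball_open|split; [apply ball_center; auto|intros ? ?; auto]]. Qed.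

Lemma nbhd_ball x U : nbhd opn x U -> exists n : nat, subset (ball x (/ (INR n + 1))) U.
Proof.
  intros [V [oV [Vx VU]]]. destruct (proj1 (dopn V) oV x Vx) as [eps [He Hb]].
  destruct (archimed (/ eps)) as [h _].
  assert (0 < / eps) by (apply Rinv_0_lt_compat; lra).
  destruct (up (/eps)) as [|p|p] eqn:Eu.
  - simpl in h. lra.
  - exists (Pos.to_nat p). intros y Hy. apply VU, Hb. unfold ball in Hy.
    assert (IZR (Z.pos p) = INR (Pos.to_nat p)) by (rewrite INR_IPR; reflexivity).
    assert (/ (INR (Pos.to_nat p) + 1) < eps).
    { rewrite <- (Rinv_inv eps). apply Rinv_lt_contravar; [|lra].
      apply Rmult_lt_0_compat; [auto|]. pose proof (pos_INR (Pos.to_nat p)); lra. }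
    lra.
  - pose proof (IZR_lt (Z.neg p) 0 (Pos2Z.neg_is_neg p)). lra.
Qed.

Lemma inv_pos n : 0 < / (INR n + 1).
Proof. apply Rinv_0_lt_compat. pose proof (pos_INR n). lra. Qed.

Lemma list_min x (l : list X) : exists eps, 0 < eps /\ forall z, In z l -> z <> x -> eps <= d x z.
Proof.
  induction l as [|a l [eps [He H]]].
  - exists 1. split; [lra|]. intros z [].
  - destruct (classic (a = x)) as [Ea|Ea].
    + exists eps. split; auto. intros z [<-|Hz] Hzx; [contradiction|auto].
    + assert (0 < d x a). { destruct (d0 x a) as [h|h]; auto. exfalso. apply Ea.
        symmetry. apply dz. auto. }
      exists (Rmin eps (d x a)). split; [apply Rmin_pos; auto|].
      intros z [<-|Hz] Hzx; [apply Rmin_r|]. eapply Rle_trans; [apply Rmin_l|auto].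
Qed.

Lemma met_sp : strong_pytkeev opn.
Proof.
  intro x. exists (fun S => exists n, ball x (/ (INR n + 1)) = S). split.
  - exists (fun n => ball x (/ (INR n + 1))). intros S [n <-]. exists n; auto.
  - intros U A HU HA HnA. destruct (nbhd_ball x U HU) as [n Hn].
    exists (ball x (/ (INR n + 1))). split; [exists n; auto|split; auto].
    intros [l Hl]. destruct (list_min x l) as [eps [He Hm]].
    destruct (HA (ball x (Rmin eps (/ (INR n + 1))))) as [y [Hy Ay]].
    + apply ball_open.
    + apply ball_center. apply Rmin_pos; auto. apply inv_pos.
    + assert (Iy : In y l). { apply Hl. split; auto. unfold ball in *.
        eapply Rlt_le_trans; [apply Hy|apply Rmin_r]. }
      assert (y <> x) by (intros ->; contradiction).
      specialize (Hm y Iy H). unfold ball in Hy. pose proof (Rmin_l eps (/ (INR n + 1))). lra.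
Qed.

Lemma met_ck : countable_ck_character opn.
Proof.
  intro x. exists (fun S => exists n, ball x (/ (INR n + 1)) = S). split.
  - exists (fun n => ball x (/ (INR n + 1))). intros S [n <-]. exists n; auto.
  - intros O HO. destruct (nbhd_ball x O HO) as [n Hn].
    exists (ball x (/ (INR n + 1))). split; [apply ball_nbhd, inv_pos|].
    intros K _ HK. exists (ball x (/ (INR n + 1)) :: nil). split; [|split; [|split]].
    + intros S [<-|[]]. exists n; auto.
    + intros S [<-|[]]. apply ball_center, inv_pos.
    + intros y Ky. exists (ball x (/ (INR n + 1))). split; [left; auto|apply HK; auto].
    + intros y [S [[<-|[]] Sy]]. apply Hn; auto.
Qed.

End Metric.

Section GMetric.
Variable G : Type.
Variable opn : (G -> Prop) -> Prop.
Variable e : G.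

Lemma met_GD : metrizable opn -> has_G_base_D opn e.
Proof.
  intros [d [d0 [dz [ds [dt dopn]]]]].
  exists (fun a => ball G d e (/ (INR (a 0%nat) + 1))). split; [split; [|split]|].
  - intro a. apply (ball_nbhd G opn d dz dt dopn), inv_pos.
  - intros O HO. destruct (nbhd_ball G opn d dopn e O HO) as [n Hn].
    exists (fun _ => n). auto.
  - intros a b Hab g. unfold ball. intro h. eapply Rlt_le_trans; [apply h|].
    apply Rinv_le_contravar; [pose proof (pos_INR (a 0%nat)); lra|].
    apply Rplus_le_compat_r, le_INR, Hab.
  - intros a g. split.
    + intro h. exists 1%nat. split; auto. intros b Hb. rewrite (Hb 0%nat); auto.
    + intros [k [Hk Hd]]. apply Hd. auto.
Qed.

End GMetric.

Section Nets.
Variable X : Type.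
Variable opn : (X -> Prop) -> Prop.

Lemma nbhd_mono x U V : nbhd opn x U -> subset U V -> nbhd opn x V.
Proof. intros [W [oW [Wx WU]]] h. exists W. split; auto. split; auto. intros y Wy; auto. Qed.

Lemma ck_cn x N : ck_network_at opn x N -> cn_network_at opn x N.
Proof.
  intros H O HO. destruct (H O HO) as [U [HU HK]].
  apply (nbhd_mono x U); auto. intros y Uy.
  assert (Kc : Defs.compact opn (fun z => z = y)).
  { intros F HF Hc. destruct (Hc y eq_refl) as [U0 [FU U0y]].
    exists (U0 :: nil). split; [intros V [<-|[]]; auto|].
    intros z ->. exists U0. split; [left|]; auto. }
  assert (KU : subset (fun z => z = y) U) by (intros z ->; auto).
  destruct (HK (fun z => z = y) Kc KU) as [Fl [HN [Hx [HKs HO']]]].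
  destruct (HKs y eq_refl) as [S [IS Sy]]. exists S. split; [auto|split; [apply Hx; auto|split; [|auto]]].
  intros z Sz. apply HO'. exists S; auto.
Qed.

Lemma sp_cn x : (exists D : (X -> Prop) -> Prop, countable_family D /\
    forall U A, nbhd opn x U -> closure opn A x -> ~ A x ->
      exists S, D S /\ subset S U /\ infinite_set (fun y => S y /\ A y)) ->
  exists N, countable_family N /\ cn_network_at opn x N.
Proof.
  intros [D [[f Hf] HD]].
  exists (fun S => S = (fun y => y = x) \/ exists T, D T /\ S = (fun y => y = x \/ T y)).
  split.
  - exists (fun n => match n with 0%nat => (fun y => y = x) | S m => (fun y => y = x \/ f m y) end).
    intros S [->|[T [DT ->]]]; [exists 0%nat; auto|]. destruct (Hf T DT) as [m <-]. exists (S m); auto.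
  - intros O HO. apply NNPP. intro Hn.
    set (H := fun y => exists S, (S = (fun y => y = x) \/ exists T, D T /\ S = (fun y => y = x \/ T y))
       /\ S x /\ subset S O /\ S y).
    fold H in Hn.
    assert (Ox : O x) by (destruct HO as [W [_ [Wx WO]]]; auto).
    assert (Hx : H x). { exists (fun y => y = x). split; [left; auto|split; auto; split; auto].
      intros z ->; auto. }
    destruct (HD O (fun y => ~ H y) HO) as [T [DT [TO Tinf]]].
    + intros V oV Vx. apply NNPP. intro Hc. apply Hn. exists V. split; auto. split; auto.
      intros y Vy. apply NNPP. intro Hy. apply Hc. exists y; auto.
    + intro h; apply h; auto.
    + apply Tinf. exists nil. intros y [Ty Hy]. exfalso. apply Hy.
      exists (fun y => y = x \/ T y). split; [right; exists T; auto|split; [left; auto|split; [|right; auto]]].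
      intros z [->|Tz]; auto.
Qed.

End Nets.

Fixpoint dec_list (len n : nat) : list nat :=
  match len with 0%nat => nil | S k => let (h, t) := Cantor.of_nat n in h :: dec_list k t end.
Fixpoint enc_list (l : list nat) : nat :=
  match l with nil => 0%nat | h :: t => Cantor.to_nat (h, enc_list t) end.
Lemma dec_S k n : dec_list (S k) n = fst (Cantor.of_nat n) :: dec_list k (snd (Cantor.of_nat n)).
Proof. cbn -[Cantor.of_nat]. destruct (Cantor.of_nat n); auto. Qed.
Lemma dec_enc l : dec_list (length l) (enc_list l) = l.
Proof. induction l as [|h t IH]; auto. change (dec_list (S (length t)) (Cantor.to_nat (h, enc_list t)) = h :: t).
  rewrite dec_S, Cantor.cancel_of_to. simpl fst; simpl snd. rewrite IH. auto. Qed.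
Definition decode (n : nat) : list nat := let (a, b) := Cantor.of_nat n in dec_list a b.
Definition code (l : list nat) : nat := Cantor.to_nat (length l, enc_list l).
Lemma decode_code l : decode (code l) = l.
Proof. unfold decode, code. rewrite Cantor.cancel_of_to. apply dec_enc. Qed.

Lemma nth_prefix (a : nat -> nat) k i : (i < k)%nat -> nth i (map a (List.seq 0 k)) 0%nat = a i.
Proof.
  intro h. rewrite (nth_indep _ _ (a 0%nat)) by (rewrite length_map, length_seq; auto).
  rewrite map_nth, seq_nth; auto.
Qed.

Section GDcn.
Variable G : Type.
Variable opn : (G -> Prop) -> Prop.
Variable e : G.

Lemma GD_cn : has_G_base_D opn e -> exists N, countable_family N /\ cn_network_at opn e N.
Proof.
  intros [U [[Hn [Hb Ha]] HD]].
  exists (fun S => exists l, S = D_set U (length l) (fun i => nth i l 0%nat)). split.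
  - exists (fun n => D_set U (length (decode n)) (fun i => nth i (decode n) 0%nat)).
    intros S [l ->]. exists (code l). rewrite decode_code. auto.
  - intros O HO. destruct (Hb O HO) as [a Ha'].
    apply (nbhd_mono G opn e (U a)); auto. intros g Ug.
    destruct (proj1 (HD a g) Ug) as [k [_ Dk]].
    set (l := map a (List.seq 0 k)).
    assert (Ll : length l = k) by (unfold l; rewrite length_map, length_seq; auto).
    assert (Eq : forall b, (forall i, (i < k)%nat -> b i = nth i l 0%nat) <-> (forall i, (i < k)%nat -> b i = a i)).
    { intro b. split; intros h i hi; rewrite h by auto; unfold l; rewrite nth_prefix; auto. }
    exists (D_set U (length l) (fun i => nth i l 0%nat)). split; [exists l; auto|].
    rewrite Ll. split; [|split].
    + intros b _. destruct (Hn b) as [P [_ [Pe PU]]]. auto.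
    + intros y Dy. apply Ha'. apply Dy. intros i hi. apply Eq; auto.
    + intros b hb. apply Dk. apply Eq; auto.
Qed.
End GDcn.

Section Baire.
Variable G : Type.
Variable opn : (G -> Prop) -> Prop.
Variable mul : G -> G -> G.
Variable inv : G -> G.
Variable e : G.
Hypothesis HT : is_topological_group opn mul inv e.
Hypothesis HBa : baire_space opn.

Lemma closure_W W a : opn W -> W e -> symm G inv W -> closure opn W a ->
  exists u v, W u /\ W v /\ a = mul u v.
Proof.
  intros oW We sW Ha.
  destruct (Ha (fun y => W (mul (inv a) y))) as [y [Ty Wy]].
  - apply (open_translate G opn mul inv e HT); auto.
  - rewrite (mul_inv_l G opn mul inv e HT). auto.
  - exists y, (inv (mul (inv a) y)). split; auto. split; [apply sW; auto|].
    rewrite (inv_mul G opn mul inv e HT), (inv_inv G opn mul inv e HT).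
    rewrite (mulA G opn mul inv e HT), (mul_inv_r G opn mul inv e HT), (mul_e_l G opn mul inv e HT). auto.
Qed.

Lemma closure_self A y : A y -> closure opn A y.
Proof. intros Ay V _ Vy. exists y; auto. Qed.

Lemma closure_mono A A' y : subset A A' -> closure opn A y -> closure opn A' y.
Proof. intros h H V oV Vy. destruct (H V oV Vy) as [z [Vz Az]]. exists z; auto. Qed.

Lemma cn_FC : (exists N, countable_family N /\ cn_network_at opn e N) ->
  exists B : nat -> (G -> Prop), forall O, nbhd opn e O -> exists n, nbhd opn e (B n) /\ subset (B n) O.
Proof.
  intros [N [[f Hf] Hcn]].
  exists (fun n g => exists a b, closure opn (f n) a /\ closure opn (f n) b /\ g = mul (inv a) b).
  intros O HO.
  destruct (quad_lem G opn mul inv e HT O HO) as [W [oW [We [sW qW]]]].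
  assert (HW : nbhd opn e W) by (exists W; split; auto; split; auto; intros ? ?; auto).
  destruct (Hcn W HW) as [Q [oQ [Qe QH]]].
  assert (Hex : exists n P x0, subset (f n) W /\ opn P /\ P x0 /\ subset P (closure opn (f n))).
  { apply NNPP. intro Hno.
    set (U := fun n g => subset (f n) W -> ~ closure opn (f n) g).
    assert (oU : forall n, opn (U n)).
    { intro n. apply (open_local G opn mul inv e HT). intros g Ug.
      destruct (classic (subset (f n) W)) as [c|c].
      - assert (Hc := Ug c). apply NNPP. intro Hn. apply Hc. intros V oV Vg.
        apply NNPP. intro Hy. apply Hn. exists V. split; auto. split; auto.
        intros z Vz c' Cz. destruct (Cz V oV Vz) as [w [Vw Fw]]. apply Hy. exists w; auto.
      - exists (fun _ => True). split; [apply (open_all G opn mul inv e HT)|split; auto].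
        intros z _ c'. contradiction. }
    assert (dU : forall n, dense opn (U n)).
    { intros n x V oV Vx. destruct (classic (subset (f n) W)) as [c|c].
      - apply NNPP. intro Hy. apply Hno. exists n, V, x. split; auto. split; auto. split; auto.
        intros y Vy. apply NNPP. intro Cy. apply Hy. exists y. split; auto. intros _; auto.
      - exists x. split; auto. intro; contradiction. }
    destruct (HBa U oU dU e Q oQ Qe) as [y [Qy Uy]].
    destruct (QH y Qy) as [S [NS [Se [SW Sy]]]].
    destruct (Hf S NS) as [n <-].
    apply (Uy n SW). apply closure_self; auto. }
  destruct Hex as [n [P [x0 [fW [oP [Px0 PC]]]]]].
  exists n. split.
  - exists (fun g => P (mul x0 g)). split; [apply (open_translate G opn mul inv e HT); auto|].
    split; [rewrite (mul_e_r G opn mul inv e HT); auto|].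
    intros g Pg. exists x0, (mul x0 g). split; [apply PC; auto|split; [apply PC; auto|]].
    rewrite (mul_inv_cancel_l G opn mul inv e HT). auto.
  - intros g [a [b [Ca [Cb ->]]]].
    destruct (closure_W W a oW We sW (closure_mono _ _ _ fW Ca)) as [u [v [Wu [Wv ->]]]].
    destruct (closure_W W b oW We sW (closure_mono _ _ _ fW Cb)) as [u' [v' [Wu' [Wv' ->]]]].
    rewrite (inv_mul G opn mul inv e HT), <- (mulA G opn mul inv e HT).
    apply qW; auto.
Qed.

End Baire.

Theorem mainTheorem4 (G : Type) (opn : (G -> Prop) -> Prop)
  (mul : G -> G -> G) (inv : G -> G) (e : G) :
  is_topological_group opn mul inv e ->
  hausdorff opn ->
  baire_space opn ->
  (metrizable opn <-> strong_pytkeev opn) /\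
  (metrizable opn <-> countable_ck_character opn) /\
  (metrizable opn <-> countable_cn_character opn) /\
  (metrizable opn <-> has_G_base_D opn e).
Proof.
  intros HT HH HBa.
  assert (FM : (exists N, countable_family N /\ cn_network_at opn e N) -> metrizable opn).
  { intro h. destruct (cn_FC G opn mul inv e HT HBa h) as [B HB].
    apply (BK_metrizable G opn mul inv e HT HH B HB). }
  split; [|split; [|split]]; split.
  - intros [d [d0 [dz [ds [dt dopn]]]]]. apply (met_sp G opn d d0 dz dt dopn).
  - intro h. apply FM. apply sp_cn. apply h.
  - intros [d [d0 [dz [ds [dt dopn]]]]]. apply (met_ck G opn d dz dt dopn).
  - intro h. apply FM. destruct (h e) as [N [cN hN]]. exists N. split; auto. apply ck_cn; auto.
  - intros [d [d0 [dz [ds [dt dopn]]]]] x. destruct (met_ck G opn d dz dt dopn x) as [N [cN hN]].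
    exists N. split; auto. apply ck_cn; auto.
  - intro h. apply FM, h.
  - apply met_GD.
  - intro h. apply FM, GD_cn, h.
Qed.
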